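(* Let $k$ be a difference field of characteristic $0$ and $R=k\{y_1,\ldots,y_n\}$. If $\mathbf{u},\mathbf{v}\in\mathbb{N}[x]^n$ satisfy $\mathbf{u}\preceq\mathbf{v}$, then $\mathbf{y}^{\mathbf{v}}\in\langle\mathbf{y}^{\mathbf{u}}\rangle$.
   Context: A difference field is a field $k$ with a ring endomorphism $\sigma$; $R=k\{y_1,\ldots,y_n\}$ is the polynomial ring over $k$ in the variables $\sigma^j(y_i)$, with $\sigma$ extended naturally. For $p=\sum_ic_ix^i\in\mathbb{N}[x]$ and $a\in R$, $a^p=\prod_i(\sigma^i(a))^{c_i}$; $\mathbf{y}^{\mathbf{u}}=y_1^{u_1}\cdots y_n^{u_n}$. $\langle F\rangle$ is the smallest well-mixed $\sigma$-ideal containing $F$ (a $\sigma$-ideal $I$ is well-mixed if $ab\in I\Rightarrow a\sigma(b)\in I$). Partial order $\preceq$: for $f=\sum_{i}f_ix^i,g=\sum_ig_ix^i\in\mathbb{N}[x]$ (coefficients padded by zeros up to a common index $K$), $f\preceq g$ iff $\sum_{j=i}^Kf_j\le\sum_{j=i}^Kg_j$ for all $i=0,\ldots,K$; for vectors, $\mathbf{u}\preceq\mathbf{v}$ iff $u_i\preceq v_i$ for all $i$. *)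

(* Defs.v *)
From HB Require Import structures.
From mathcomp Require Import all_boot all_order all_algebra.
From mathcomp Require Import finmap.
From mathcomp.multinomials Require Import monalg.
Set Implicit Arguments. Unset Strict Implicit. Unset Printing Implicit Defensive.
Import Order.TTheory GRing.Theory.
Local Open Scope ring_scope.

(* The difference polynomial ring k{y_1,...,y_n}: the polynomial ring over k
   in the (infinitely many) variables sigma^j(y_i), i : 'I_n, j : nat.
   The variable sigma^j(y_i) is indexed by the pair (i, j). *)
Definition dvar (n : nat) := ('I_n * nat)%type.
Definition dpoly (k : comNzRingType) (n : nat) := {malg k[cmonom (dvar n)]}.

Definition Y (k : comNzRingType) (n : nat) (i : 'I_n) (j : nat) : dpoly k n :=
  << ucm ((i, j) : dvar n) >>.

Definition sigmaR (k : comNzRingType) (n : nat) (sigma : {rmorphism k -> k})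
    (g : dpoly k n) : dpoly k n :=
  \sum_(m <- msupp g)
     (sigma (g@_m))%:MP *
     \prod_(p <- finsupp m) Y k p.1 p.2.+1 ^+ (m p).

Definition dpow (k : comNzRingType) (n : nat) (sigma : {rmorphism k -> k})
    (a : dpoly k n) (p : {poly nat}) : dpoly k n :=
  \prod_(i < size p) (iter i (sigmaR sigma) a) ^+ (nth 0%N p i).

Definition ymon (k : comNzRingType) (n : nat) (sigma : {rmorphism k -> k})
    (u : 'I_n -> {poly nat}) : dpoly k n :=
  \prod_(i < n) dpow sigma (Y k i 0) (u i).

Definition poly_preceq (f g : {poly nat}) : Prop :=
  let K := maxn (size f) (size g) in
  forall i : nat, (i <= K)%N ->
    (\sum_(i <= j < K.+1) nth 0%N f j <= \sum_(i <= j < K.+1) nth 0%N g j)%N.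

Definition vec_preceq (n : nat) (u v : 'I_n -> {poly nat}) : Prop :=
  forall i : 'I_n, poly_preceq (u i) (v i).

Definition is_ideal (R : comNzRingType) (I : R -> Prop) : Prop :=
  [/\ I 0, (forall a b, I a -> I b -> I (a + b)) &
      (forall r a, I a -> I (r * a))].

Definition is_sigma_ideal (R : comNzRingType) (s : R -> R) (I : R -> Prop) :=
  is_ideal I /\ (forall a, I a -> I (s a)).

Definition is_well_mixed_sigma_ideal (R : comNzRingType) (s : R -> R)
    (I : R -> Prop) :=
  is_sigma_ideal s I /\ (forall a b, I (a * b) -> I (a * s b)).

Definition in_wm_closure (R : comNzRingType) (s : R -> R) (F : R -> Prop)
    (a : R) : Prop :=
  forall I : R -> Prop, is_well_mixed_sigma_ideal s I ->
    (forall f, F f -> I f) -> I a.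

(* Main.v *)
Require Import Defs.
Set Warnings "-all".
From HB Require Import structures.
From mathcomp Require Import all_boot all_order all_algebra.
From mathcomp Require Import finmap.
From mathcomp.multinomials Require Import monalg.
From mathcomp Require Import zify.
Import GRing.Theory.
Local Open Scope ring_scope.
Section Core.
Variables (R : comNzRingType) (I : R -> Prop).
Hypothesis Imul : forall r a, I a -> I (r * a).

Lemma shift_pow (y : nat -> R) (Hy : forall a j, I (a * y j) -> I (a * y j.+1))
  j e : forall a, I (a * y j ^+ e) -> I (a * y j.+1 ^+ e).
Proof.
elim: e => [//|e IH] a H.
rewrite exprSr mulrA in H.
have := Hy _ _ H; rewrite -mulrA (mulrC (y j ^+ e)) mulrA => /IH.
by rewrite -mulrA -exprS.
Qed.

Lemma core N : forall (y : nat -> R), (forall a j, I (a * y j) -> I (a * y j.+1)) ->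
  forall f g : nat -> nat,
  (forall i, (i <= N)%N -> (\sum_(i <= j < N) f j <= \sum_(i <= j < N) g j)%N) ->
  forall a, I (a * \prod_(0 <= j < N) y j ^+ f j) -> I (a * \prod_(0 <= j < N) y j ^+ g j).
Proof.
elim: N => [|N IH] y Hy f g Hfg a.
  by rewrite !big_geq.
rewrite !big_nat_recl //.
have Hsh : forall i, (i <= N)%N ->
  (\sum_(i <= j < N) f j.+1 <= \sum_(i <= j < N) g j.+1)%N.
  by move=> i hi; have := Hfg i.+1 hi; rewrite !big_add1.
have Hy' : forall a j, I (a * y j.+1) -> I (a * y j.+2) by move=> ? ?; apply: Hy.
have H0 := Hfg 0%N isT; rewrite !big_nat_recl // in H0.
case: (leqP (f 0%N) (g 0%N)) => hle.
  move=> H; have := Imul (y 0%N ^+ (g 0%N - f 0%N)) _ H.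
  move=> H'; rewrite mulrCA [X in a * X]mulrA -exprD subnK // mulrA in H'.
  rewrite mulrA; exact: (IH _ Hy' (fun j => f j.+1)).
case: N IH Hfg Hsh Hy' H0 => [|N] IH Hfg Hsh Hy' H0.
  by move: H0; rewrite !big_geq //= !addn0 leqNgt hle.
set e := (f 0%N - g 0%N)%N.
have fE : f 0%N = (g 0%N + e)%N by rewrite subnKC // ltnW.
rewrite fE exprD => H.
have : I ((a * y 0%N ^+ g 0%N * \prod_(0 <= i < N.+1) y i.+1 ^+ f i.+1) * y 0%N ^+ e).
  by move: H; rewrite -!mulrA (mulrC (y 0%N ^+ e)) !mulrA.
move=> /(shift_pow _ Hy) H1.
pose f'' j := if j == 0%N then (f 1%N + e)%N else f j.+1.
have Pf : \prod_(0 <= i < N.+1) y i.+1 ^+ f i.+1 * y 1%N ^+ e =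
          \prod_(0 <= i < N.+1) y i.+1 ^+ f'' i.
  rewrite !big_nat_recl //= /f'' eqxx exprD.
  rewrite [X in _ = _ * X](eq_big_nat _ _ (F2 := fun i => y i.+2 ^+ f i.+2)) //.
  by rewrite mulrAC.
rewrite -mulrA Pf in H1.
rewrite mulrA; apply: (IH _ Hy' f'') => //.
move=> i hi; case: i hi => [|i] hi.
  rewrite !big_nat_recl //= /f'' eqxx.
  rewrite (eq_big_nat _ _ (F2 := fun i => f i.+2)) //.
  move: H0; rewrite !big_nat_recl //= fE.
  lia.
rewrite (eq_big_nat _ _ (F2 := fun i => f i.+1)); first exact: Hsh.
by move=> j /andP[hj _]; rewrite /f''; case: j hj.
Qed.
End Core.
Lemma sigmaR_Y (k : comNzRingType) (n : nat) (sigma : {rmorphism k -> k}) (i : 'I_n) (j : nat) :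
  sigmaR sigma (Y k i j) = Y k i j.+1.
Proof.
rewrite /sigmaR /Y msuppU1 big_seq_fset1 mcoeffU1 eqxx rmorph1.
rewrite mdomU big_seq_fset1 ucmE eqxx expr1.
by rewrite mul1r. Qed.

Lemma iter_sigmaR_Y (k : comNzRingType) (n : nat) (sigma : {rmorphism k -> k})
  (i : 'I_n) j : iter j (sigmaR sigma) (Y k i 0) = Y k i j.
Proof. elim: j => [|j IH]. reflexivity. rewrite iterS IH. exact: sigmaR_Y. Qed.
Lemma dpowE (k : comNzRingType) (n : nat) (sigma : {rmorphism k -> k})
  (i : 'I_n) (p : {poly nat}) N : (size p <= N)%N ->
  dpow sigma (Y k i 0) p = \prod_(0 <= j < N) Y k i j ^+ nth 0%N p j.
Proof.
move=> hN; rewrite /dpow.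
rewrite (eq_bigr (fun j : 'I_(size p) => Y k i j ^+ nth 0%N p j)); last first.
  move=> j _; rewrite (iter_sigmaR_Y k n sigma i j); reflexivity.
rewrite -(big_mkord xpredT (fun j => Y k i j ^+ nth 0%N p j)).
rewrite (big_cat_nat (leq0n (size p)) hN) /=.
rewrite [X in _ = _ * X]big1_seq ?mulr1 //.
move=> j; rewrite mem_index_iota => /andP[_ /andP[hj _]].
rewrite nth_default //; exact: expr0.
Qed.

Lemma prod_step (R : comNzRingType) (I : R -> Prop) (T : Type) (r : seq T)
  (F G : T -> R) :
  (forall x a, I (a * F x) -> I (a * G x)) ->
  forall a, I (a * \prod_(x <- r) F x) -> I (a * \prod_(x <- r) G x).
Proof.
move=> HFG; elim: r => [|x r IH] a; first by rewrite !big_nil.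
rewrite !big_cons => H.
rewrite mulrCA mulrC in H.
have := HFG x _ H.
rewrite mulrC mulrCA mulrA => /IH.
by rewrite mulrA.
Qed.

Theorem lemma4p4 (k : fieldType) (sigma : {rmorphism k -> k})
    (hchar : [pchar k] =i pred0) (n : nat) (u v : 'I_n -> {poly nat}) :
  vec_preceq u v ->
  in_wm_closure (sigmaR sigma) (fun f => f = ymon sigma u) (ymon sigma v).
Proof.
move=> Huv I [[[I0 Iadd Imul] Isig] Iwm] HF.
have Hu := HF _ erefl.
have Hy : forall (i : 'I_n) a j, I (a * Y k i j) -> I (a * Y k i j.+1).
  by move=> i a j /Iwm; rewrite (sigmaR_Y k n sigma i j).
suff : I (1 * ymon sigma v) by rewrite mul1r.
have : I (1 * ymon sigma u) by rewrite mul1r.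
apply: (@prod_step _ I) => i a.
set K := maxn (size (u i)) (size (v i)).
rewrite (dpowE k n sigma i (u i) K.+1); last exact: leq_trans (leq_maxl _ _) (leqnSn _).
rewrite (dpowE k n sigma i (v i) K.+1); last exact: leq_trans (leq_maxr _ _) (leqnSn _).
apply: (@core _ I Imul K.+1 (fun j => Y k i j) (Hy i) (nth 0%N (u i)) (nth 0%N (v i))) => j hj.
case: (leqP j K) => hjK; first exact: (Huv i j hjK).
by rewrite !big_geq.
Qed.
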